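(* Let $\Bbbk$ be a field of characteristic zero. The algebra $A=\Bbbk[x_1,\ldots,x_6]/(x_1^3,x_2^3,x_3^3,x_4^3,x_5^3,x_6^3,x_1 x_2 x_3)$ fails the WLP in degree $5$.
   Context: For a monomial quotient $A$, $A$ fails the WLP in degree $i$ if $\times(x_1+\cdots+x_6): A_i\to A_{i+1}$ is neither injective nor surjective. *)

(* Defs.v *)
From HB Require Import structures.
From mathcomp Require Import all_boot all_order all_algebra.
From mathcomp Require Import mpoly.
Set Implicit Arguments. Unset Strict Implicit. Unset Printing Implicit Defensive.
Import GRing.Theory.
Local Open Scope ring_scope.

(* Polynomial ring k[x_1,...,x_6]; variables indexed by 'I_6 (x_{i+1} = 'X_i). *)
Definition var (k : fieldType) (i : nat) : {mpoly k[6]} := 'X_(inord i).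

Definition inI (k : fieldType) (p : {mpoly k[6]}) : Prop :=
  exists (c : 'I_6 -> {mpoly k[6]}) (d : {mpoly k[6]}),
    p = \sum_(i < 6) c i * 'X_i ^+ 3 + d * (var k 0 * var k 1 * var k 2).

Definition ell (k : fieldType) : {mpoly k[6]} := \sum_(i < 6) 'X_i.

(* A = k[x]/I is graded with A_i = R_i / (I cap R_i) (I is homogeneous).
   The multiplication map  x l : A_i -> A_{i+1}, [p] |-> [l p].  *)
Definition mul_ell_injective (k : fieldType) (i : nat) : Prop :=
  forall p : {mpoly k[6]}, p \is i.-homog -> inI (ell k * p) -> inI p.

Definition mul_ell_surjective (k : fieldType) (i : nat) : Prop :=
  forall q : {mpoly k[6]}, q \is i.+1.-homog ->
    exists p : {mpoly k[6]}, p \is i.-homog /\ inI (q - ell k * p).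

Definition fails_WLP_in_degree (k : fieldType) (i : nat) : Prop :=
  ~ mul_ell_injective k i /\ ~ mul_ell_surjective k i.

(* Main.v *)
Require Import Defs.
From HB Require Import structures.
From mathcomp Require Import all_boot all_order all_algebra.
From mathcomp Require Import mpoly.
From mathcomp Require Import ring zify.
Import GRing.Theory.
Local Open Scope ring_scope.
Set Implicit Arguments. Unset Strict Implicit. Unset Printing Implicit Defensive.

Definition mon (a b c d e f : nat) : 'X_{1..6} := [multinom of [:: a; b; c; d; e; f]].

Lemma monE_i a b c d e f j : (j < 6)%N ->
  (mon a b c d e f) (inord j) = nth 0%N [:: a; b; c; d; e; f] j.
Proof. move=> hj. by rewrite /mon multinomE (tnth_nth 0%N) inordK. Qed.

Lemma inord_eq (i j : nat) : (i < 6)%N -> (j < 6)%N ->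
  ((inord i : 'I_6) == inord j) = (i == j).
Proof. by move=> hi hj; rewrite -val_eqE /= !inordK. Qed.

Lemma big6 (R : Type) (idx : R) (op : Monoid.law idx) (F : 'I_6 -> R) :
  \big[op/idx]_(i < 6) F i =
  op (F (inord 0)) (op (F (inord 1)) (op (F (inord 2))
    (op (F (inord 3)) (op (F (inord 4)) (F (inord 5)))))).
Proof.
rewrite !big_ord_recl big_ord0 Monoid.mulm1.
by congr (op (F _) (op (F _) (op (F _) (op (F _) (op (F _) (F _))))));
  apply/val_inj; rewrite /= inordK.
Qed.

Section Main.
Variable k : fieldType.
Local Notation R := {mpoly k[6]}.

Definition Phi (w : 'X_{1..6} -> k) (f : R) : k :=
  \sum_(m <- msupp f) f@_m * w m.

Lemma PhiE w f r : uniq r -> {subset msupp f <= r} ->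
  Phi w f = \sum_(m <- r) f@_m * w m.
Proof.
move=> ur sub; rewrite (bigID (fun m => m \in msupp f)) /=.
rewrite [X in _ + X]big1 ?addr0; last first.
  by move=> m /memN_msupp_eq0 ->; rewrite mul0r.
rewrite -big_filter; apply: perm_big.
apply: uniq_perm (msupp_uniq f) (filter_uniq _ ur) _ => m.
rewrite mem_filter; case H: (m \in msupp f) => //=.
by rewrite (sub _ H).
Qed.

Lemma PhiD w f g : Phi w (f + g) = Phi w f + Phi w g.
Proof.
set r := undup (msupp f ++ msupp g).
have ur : uniq r by exact: undup_uniq.
rewrite !(@PhiE _ _ r) //.
- by rewrite -big_split /=; apply: eq_bigr => m _; rewrite mcoeffD mulrDl.
- by move=> m hm; rewrite mem_undup mem_cat hm orbT.
- by move=> m hm; rewrite mem_undup mem_cat hm.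
- by move=> m /msuppD_le; rewrite mem_undup.
Qed.

Lemma Phi0 w : Phi w 0 = 0.
Proof. by apply: (@addrI _ (Phi w 0)); rewrite addr0 -PhiD addr0. Qed.

Lemma PhiN w f : Phi w (- f) = - Phi w f.
Proof.
have := PhiD w f (- f); rewrite subrr Phi0 => /esym/eqP.
by rewrite addrC addr_eq0 => /eqP.
Qed.

Lemma PhiB w f g : Phi w (f - g) = Phi w f - Phi w g.
Proof. by rewrite PhiD PhiN. Qed.

Lemma Phi_sum w (I : Type) (r : seq I) (F : I -> R) :
  Phi w (\sum_(i <- r) F i) = \sum_(i <- r) Phi w (F i).
Proof. exact: (big_morph _ (PhiD w) (Phi0 w)). Qed.

Lemma PhiZX w c m : Phi w (c *: 'X_[m]) = c * w m.
Proof.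
rewrite (@PhiE _ _ [:: m]) //; last first.
  by move=> m' /msuppZ_le; rewrite msuppX.
by rewrite big_seq1 mcoeffZ mcoeffX eqxx mulr1.
Qed.

Lemma PhiX w m : Phi w 'X_[m] = w m.
Proof. by rewrite -[X in Phi w X]scale1r PhiZX mul1r. Qed.

Lemma PhiMX w p g :
  Phi w (p * 'X_[g]) = \sum_(m <- msupp p) p@_m * w (m + g)%MM.
Proof.
rewrite {1}(mpolyE p) mulr_suml Phi_sum; apply: eq_bigr => m _.
by rewrite -scalerAl -mpolyXD PhiZX.
Qed.

Lemma PhiI w :
  (forall m (i : 'I_6), w (m + U_(i) *+ 3)%MM = 0) ->
  (forall m, w (m + (U_(inord 0) + U_(inord 1) + U_(inord 2)))%MM = 0) ->
  forall f, inI f -> Phi w f = 0.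
Proof.
move=> hw3 hw012 f [c [d ->]].
rewrite PhiD Phi_sum big1 ?add0r.
  rewrite /var -!mpolyXD PhiMX big1 // => m _.
  by rewrite hw012 mulr0.
move=> i _; rewrite mpolyXn PhiMX big1 // => m _.
by rewrite hw3 mulr0.
Qed.

End Main.


Definition tbl (a b c d e f : nat) : int :=
  match a, b, c, d, e, f with
  | 0, 1, 2, 0, 1, 2 => 1
  | 0, 1, 2, 0, 2, 1 => -1
  | 0, 1, 2, 1, 0, 2 => -1
  | 0, 1, 2, 1, 2, 0 => 1
  | 0, 1, 2, 2, 0, 1 => 1
  | 0, 1, 2, 2, 1, 0 => -1
  | 0, 2, 1, 0, 1, 2 => -1
  | 0, 2, 1, 0, 2, 1 => 1
  | 0, 2, 1, 1, 0, 2 => 1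
  | 0, 2, 1, 1, 2, 0 => -1
  | 0, 2, 1, 2, 0, 1 => -1
  | 0, 2, 1, 2, 1, 0 => 1
  | 1, 0, 2, 0, 1, 2 => -1
  | 1, 0, 2, 0, 2, 1 => 1
  | 1, 0, 2, 1, 0, 2 => 1
  | 1, 0, 2, 1, 2, 0 => -1
  | 1, 0, 2, 2, 0, 1 => -1
  | 1, 0, 2, 2, 1, 0 => 1
  | 1, 2, 0, 0, 1, 2 => 1
  | 1, 2, 0, 0, 2, 1 => -1
  | 1, 2, 0, 1, 0, 2 => -1
  | 1, 2, 0, 1, 2, 0 => 1
  | 1, 2, 0, 2, 0, 1 => 1
  | 1, 2, 0, 2, 1, 0 => -1
  | 2, 0, 1, 0, 1, 2 => 1
  | 2, 0, 1, 0, 2, 1 => -1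
  | 2, 0, 1, 1, 0, 2 => -1
  | 2, 0, 1, 1, 2, 0 => 1
  | 2, 0, 1, 2, 0, 1 => 1
  | 2, 0, 1, 2, 1, 0 => -1
  | 2, 1, 0, 0, 1, 2 => -1
  | 2, 1, 0, 0, 2, 1 => 1
  | 2, 1, 0, 1, 0, 2 => 1
  | 2, 1, 0, 1, 2, 0 => -1
  | 2, 1, 0, 2, 0, 1 => -1
  | 2, 1, 0, 2, 1, 0 => 1
  | _, _, _, _, _, _ => 0
  end.

Definition wf (a b c d e f : nat) : int :=
  if [|| (2 < a)%N, (2 < b)%N, (2 < c)%N, (2 < d)%N, (2 < e)%N, (2 < f)%N
       | [&& (0 < a)%N, (0 < b)%N & (0 < c)%N]] then 0 else tbl a b c d e f.

Lemma wf_sum a b c d e f :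
  wf a.+1 b c d e f + (wf a b.+1 c d e f + (wf a b c.+1 d e f +
  (wf a b c d.+1 e f + (wf a b c d e.+1 f + wf a b c d e f.+1)))) = 0.
Proof.
case: a => [|[|[|a]]]; case: b => [|[|[|b]]]; case: c => [|[|[|c]]];
case: d => [|[|[|d]]]; case: e => [|[|[|e]]]; case: f => [|[|[|f]]];
vm_compute; reflexivity.
Qed.

Definition wz (m : 'X_{1..6}) : int :=
  wf (m (inord 0)) (m (inord 1)) (m (inord 2)) (m (inord 3)) (m (inord 4)) (m (inord 5)).

Lemma wz_ge3 (m : 'X_{1..6}) (i : 'I_6) : (2 < m i)%N -> wz m = 0.
Proof.
have -> : i = inord i by apply/val_inj; rewrite /= inordK.
rewrite /wz /wf.
case: i => [[|[|[|[|[|[|//]]]]]] Hi] /= H; by rewrite H ?orbT.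
Qed.

Lemma wz_012 (m : 'X_{1..6}) : (0 < m (inord 0))%N -> (0 < m (inord 1))%N ->
  (0 < m (inord 2))%N -> wz m = 0.
Proof. by move=> h0 h1 h2; rewrite /wz /wf h0 h1 h2 /= !orbT. Qed.

Lemma wz_sum (m : 'X_{1..6}) : \sum_(j < 6) wz (m + U_(j))%MM = 0.
Proof.
rewrite big6 /wz !mnmDE !mnm1E !inord_eq //= !addn0 !addn1.
exact: wf_sum.
Qed.

Section Surj.
Variable k : fieldType.
Local Notation R := {mpoly k[6]}.

Definition w6 (m : 'X_{1..6}) : k := (wz m)%:~R.

Lemma w6_3 m (i : 'I_6) : w6 (m + U_(i) *+ 3)%MM = 0.
Proof.
rewrite /w6 (@wz_ge3 _ i) //.
rewrite mnmDE mulmnE mnm1E eqxx; lia.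
Qed.

Lemma w6_012 m : w6 (m + (U_(inord 0) + U_(inord 1) + U_(inord 2)))%MM = 0.
Proof.
rewrite /w6 wz_012 // !mnmDE !mnm1E !inord_eq //=; lia.
Qed.

Lemma ellE : ell k = \sum_(j < 6) 'X_j.
Proof. by []. Qed.

Lemma Phi_ell (p : R) : Phi w6 (ell k * p) = 0.
Proof.
rewrite ellE mulr_suml Phi_sum.
under eq_bigr => j _ do rewrite mulrC PhiMX.
rewrite exchange_big /= big1 // => m _.
by rewrite -mulr_sumr /w6 -rmorph_sum /= wz_sum mulr0.
Qed.

Definition s6 := mon 0 1 2 0 1 2.

Lemma not_surj : ~ mul_ell_surjective k 5.
Proof.
move=> hs.
have hq : ('X_[s6] : R) \is 6.-homog.
  by rewrite dhomogX /= mdegE big6 !monE_i.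
have [p [_ hI]] := hs _ hq.
have := PhiI w6_3 w6_012 hI.
rewrite PhiB Phi_ell subr0 PhiX /w6 /wz !monE_i //=.
by move/eqP; rewrite oner_eq0.
Qed.

End Surj.


Section NonInj.
Variable k : fieldType.
Local Notation R := {mpoly k[6]}.
Local Notation v := (var k).

Lemma monE a b c d e f : ('X_[mon a b c d e f] : R) =
  v 0 ^+ a * (v 1 ^+ b * (v 2 ^+ c * (v 3 ^+ d * (v 4 ^+ e * v 5 ^+ f)))).
Proof. by rewrite mpolyXE_id big6 !monE_i. Qed.

Definition Fp : R := v 0 * v 0 + v 1 * v 1 + v 2 * v 2 - v 0 * v 1 - v 0 * v 2 - v 1 * v 2.
Definition Dp : R := (v 3 - v 4) * (v 3 - v 5) * (v 4 - v 5).
Definition pk : R := Fp * Dp.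

Lemma pkE : pk = - 'X_[mon 0 0 2 0 1 2] + 'X_[mon 0 0 2 0 2 1] + 'X_[mon 0 0 2 1 0 2] - 'X_[mon 0 0 2 1 2 0] - 'X_[mon 0 0 2 2 0 1] + 'X_[mon 0 0 2 2 1 0] + 'X_[mon 0 1 1 0 1 2] - 'X_[mon 0 1 1 0 2 1] - 'X_[mon 0 1 1 1 0 2] + 'X_[mon 0 1 1 1 2 0] + 'X_[mon 0 1 1 2 0 1] - 'X_[mon 0 1 1 2 1 0] - 'X_[mon 0 2 0 0 1 2] + 'X_[mon 0 2 0 0 2 1] + 'X_[mon 0 2 0 1 0 2] - 'X_[mon 0 2 0 1 2 0] - 'X_[mon 0 2 0 2 0 1] + 'X_[mon 0 2 0 2 1 0] + 'X_[mon 1 0 1 0 1 2] - 'X_[mon 1 0 1 0 2 1] - 'X_[mon 1 0 1 1 0 2] + 'X_[mon 1 0 1 1 2 0] + 'X_[mon 1 0 1 2 0 1] - 'X_[mon 1 0 1 2 1 0] + 'X_[mon 1 1 0 0 1 2] - 'X_[mon 1 1 0 0 2 1] - 'X_[mon 1 1 0 1 0 2] + 'X_[mon 1 1 0 1 2 0] + 'X_[mon 1 1 0 2 0 1] - 'X_[mon 1 1 0 2 1 0] - 'X_[mon 2 0 0 0 1 2] + 'X_[mon 2 0 0 0 2 1] + 'X_[mon 2 0 0 1 0 2] - 'X_[mon 2 0 0 1 2 0] - 'X_[mon 2 0 0 2 0 1] + 'X_[mon 2 0 0 2 1 0].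
Proof. rewrite !monE /pk /Fp /Dp. ring. Qed.

Lemma var_homog i : v i \is 1.-homog.
Proof. by rewrite /var dhomogX /= mdeg1. Qed.

Lemma pk_homog : pk \is 5.-homog.
Proof.
have h1 := var_homog.
have hF : Fp \is 2.-homog.
  have h2 : forall i j, v i * v j \is 2.-homog.
    move=> i j. have := dhomogM (h1 i) (h1 j). done.
  rewrite /Fp; repeat (apply: rpredB || apply: rpredD); exact: h2.
have hD : Dp \is 3.-homog.
  have := dhomogM (dhomogM (rpredB (h1 3) (h1 4)) (rpredB (h1 3) (h1 5))) (rpredB (h1 4) (h1 5)).
  done.
have := dhomogM hF hD. done.
Qed.

Lemma ell_pk_inI : inI (ell k * pk).
Proof.
exists (fun i : 'I_6 => nth 0 [:: Dp; Dp; Dp; Fp * (v 4 - v 5); Fp * (v 5 - v 3); Fp * (v 3 - v 4)] i).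
exists (- 3%:R * Dp).
rewrite ellE !big6 !inordK //= /pk /Fp /Dp /var.
ring.
Qed.

Definition s5 := mon 0 0 2 0 1 2.
Definition wd (m : 'X_{1..6}) : k := (m == s5)%:R.

Lemma s5_lt3 (i : 'I_6) : (s5 i < 3)%N.
Proof. move: i => [[|[|[|[|[|[|//]]]]]] Hi]; by vm_compute. Qed.

Lemma wd_3 m (i : 'I_6) : wd (m + U_(i) *+ 3)%MM = 0.
Proof.
rewrite /wd; case: eqP => // H; exfalso.
have := s5_lt3 i; rewrite -H mnmDE mulmnE mnm1E eqxx; lia.
Qed.

Lemma wd_012 m : wd (m + (U_(inord 0) + U_(inord 1) + U_(inord 2)))%MM = 0.
Proof.
rewrite /wd; case: eqP => // H; exfalso.
have : s5 (inord 0) = 0%N by rewrite monE_i.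
rewrite -H !mnmDE !mnm1E !inord_eq //=; lia.
Qed.

Lemma Phi_pk : Phi wd pk = -1.
Proof.
rewrite pkE !(PhiD, PhiB, PhiN, PhiX) /wd /=.
ring.
Qed.

Lemma not_inj : ~ mul_ell_injective k 5.
Proof.
move=> hi.
have := PhiI wd_3 wd_012 (hi _ pk_homog ell_pk_inI).
by rewrite Phi_pk => /eqP; rewrite oppr_eq0 oner_eq0.
Qed.

End NonInj.

Theorem lemma5p5 (k : fieldType) (hchar : [pchar k] =i pred0) :
  fails_WLP_in_degree k 5.
Proof. split; [exact: not_inj | exact: not_surj]. Qed.
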